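(* Let $N$ be a prime, and for each $r\in\mathbb{Z}$ with $2\le|r|<\frac12N$, let $\gamma_{r,1}\in\Gamma_0(N)$ be a matrix with top row $\begin{pmatrix} r&-1\end{pmatrix}$. Then any matrix $\begin{pmatrix} A & B \\ CN & D \end{pmatrix} \in \Gamma_0(N)$ (with $A,B,C,D\in\mathbb{Z}$) may be written in the form $\pm\tau_1\tau_2\cdots\tau_l$ with $\tau_i\in\{T,T^{-1},W,W^{-1},\gamma_{r,1}^{-1}:2\le|r|<\frac12N\}$ for each $i=1,\ldots,l$, in such a way that $$\#\{i:\tau_i\in\{\gamma_{r,1}^{-1}\}\}\le\log_2(|A|).$$
   Context: Here $T=\begin{pmatrix}1&1\\0&1\end{pmatrix}$, $W=\begin{pmatrix}1&0\\N&1\end{pmatrix}$, and $\Gamma_0(N)$ is the usual Hecke congruence subgroup of $\mathrm{SL}_2(\mathbb{Z})$ consisting of matrices with lower-left entry divisible by $N$. *)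

(* Defs.v *)
From HB Require Import structures.
From mathcomp Require Import all_boot all_order all_algebra.
Set Implicit Arguments. Unset Strict Implicit. Unset Printing Implicit Defensive.
Import Order.TTheory GRing.Theory Num.Theory.
Local Open Scope ring_scope.

Definition i0 : 'I_2 := @Ordinal 2 0 isT.
Definition i1 : 'I_2 := @Ordinal 2 1 isT.

Definition mx2 (a b c d : int) : 'M[int]_2 :=
  \matrix_(i < 2, j < 2)
    if i == i0 then (if j == i0 then a else b) else (if j == i0 then c else d).

Definition Tmx : 'M[int]_2 := mx2 1 1 0 1.
Definition Wmx (N : nat) : 'M[int]_2 := mx2 1 0 N%:Z 1.

Definition inGamma0 (N : nat) (M : 'M[int]_2) : Prop :=
  \det M = 1 /\ (N%:Z %| M i1 i0)%Z.

Definition admissible_r (N : nat) (r : int) : bool :=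
  (2 <= `|r|) && (2 * `|r| < N%:Z).

Inductive gen : Type :=
  | gT | gTinv | gW | gWinv | gGinv of int.

Definition gen_ok (N : nat) (t : gen) : bool :=
  if t is gGinv r then admissible_r N r else true.

Definition gen_mx (N : nat) (gamma : int -> 'M[int]_2) (t : gen) : 'M[int]_2 :=
  match t with
  | gT => Tmx
  | gTinv => invmx Tmx
  | gW => Wmx N
  | gWinv => invmx (Wmx N)
  | gGinv r => invmx (gamma r)
  end.

Definition word_mx (N : nat) (gamma : int -> 'M[int]_2) (w : seq gen) : 'M[int]_2 :=
  foldr (fun t M => gen_mx N gamma t *m M) 1%:M w.

Definition count_gamma (w : seq gen) : nat :=
  count (fun t => if t is gGinv _ then true else false) w.

(* Main.v *)
Require Import Defs.
From HB Require Import structures.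
From mathcomp Require Import all_boot all_order all_algebra.
From mathcomp Require Import zify ring lra.
Import Order.TTheory GRing.Theory Num.Theory.
Local Open Scope ring_scope.

Lemma det_mx2 a b c d : \det (mx2 a b c d) = a * d - b * c.
Proof.
rewrite (expand_det_row _ i0) !big_ord_recl big_ord0 /cofactor !mxE /=.
by rewrite !det_mx11 !mxE /= /bump /=; ring.
Qed.

Lemma mx2_eta (M : 'M[int]_2) : M = mx2 (M i0 i0) (M i0 i1) (M i1 i0) (M i1 i1).
Proof.
apply/matrixP => i j; rewrite mxE.
case: i => [[|[|i]] Hi]; case: j => [[|[|j]] Hj] //=; congr (M _ _); exact: val_inj.
Qed.

Lemma mx2_mul a b c d a' b' c' d' :
  mx2 a b c d *m mx2 a' b' c' d' =
  mx2 (a*a'+b*c') (a*b'+b*d') (c*a'+d*c') (c*b'+d*d').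
Proof.
apply/matrixP => i j; rewrite !mxE !big_ord_recl big_ord0 !mxE /=.
case: i => [[|[|i]] Hi]; case: j => [[|[|j]] Hj] //=; ring.
Qed.

Lemma mx2_one : (1%:M : 'M[int]_2) = mx2 1 0 0 1.
Proof.
apply/matrixP => i j; rewrite !mxE.
by case: i => [[|[|i]] Hi]; case: j => [[|[|j]] Hj].
Qed.

Lemma mx2_scale k a b c d : k *: mx2 a b c d = mx2 (k*a) (k*b) (k*c) (k*d).
Proof.
apply/matrixP => i j; rewrite !mxE.
by case: i => [[|[|i]] Hi]; case: j => [[|[|j]] Hj].
Qed.

Lemma invmx_eq (M X : 'M[int]_2) : M *m X = 1%:M -> invmx M = X.
Proof.
move=> H; have [uM _] := mulmx1_unit H.
by rewrite -[invmx M]mulmx1 -H mulmxA mulVmx // mul1mx.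
Qed.

Lemma invT : invmx Tmx = mx2 1 (-1) 0 1.
Proof. by apply: invmx_eq; rewrite /Tmx mx2_mul mx2_one; congr mx2; ring. Qed.

Lemma invW N : invmx (Wmx N) = mx2 1 0 (- N%:Z) 1.
Proof. by apply: invmx_eq; rewrite /Wmx mx2_mul mx2_one; congr mx2; ring. Qed.

Lemma word_cat N g w1 w2 : word_mx N g (w1 ++ w2) = word_mx N g w1 *m word_mx N g w2.
Proof.
elim: w1 => [|t w IH] /=; first by rewrite mul1mx.
by rewrite IH mulmxA.
Qed.

Definition Tw (k : int) := if 0 <= k then nseq `|k|%N gT else nseq `|k|%N gTinv.
Definition Ww (k : int) := if 0 <= k then nseq `|k|%N gW else nseq `|k|%N gWinv.

Lemma word_Tw N g k : word_mx N g (Tw k) = mx2 1 k 0 1.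
Proof.
have HP n : word_mx N g (nseq n gT) = mx2 1 n%:Z 0 1.
  elim: n => [|n IH] /=; first by rewrite mx2_one.
  by rewrite IH /Tmx mx2_mul; congr mx2; rewrite ?intS; ring.
have HN n : word_mx N g (nseq n gTinv) = mx2 1 (- n%:Z) 0 1.
  elim: n => [|n IH] /=; first by rewrite mx2_one; congr mx2.
  by rewrite IH invT mx2_mul; congr mx2; rewrite ?intS; ring.
rewrite /Tw; case: k => n; first exact: HP.
exact: HN n.+1.
Qed.

Lemma word_Ww N g k : word_mx N g (Ww k) = mx2 1 0 (k * N%:Z) 1.
Proof.
have HP n : word_mx N g (nseq n gW) = mx2 1 0 (n%:Z * N%:Z) 1.
  elim: n => [|n IH] /=; first by rewrite mx2_one; congr mx2; ring.
  by rewrite IH /Wmx mx2_mul; congr mx2; rewrite ?intS; ring.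
have HN n : word_mx N g (nseq n gWinv) = mx2 1 0 (- n%:Z * N%:Z) 1.
  elim: n => [|n IH] /=; first by rewrite mx2_one; congr mx2; ring.
  by rewrite IH invW mx2_mul; congr mx2; rewrite ?intS; ring.
rewrite /Ww; case: k => n; first exact: HP.
exact: HN n.+1.
Qed.

Lemma Tw_ok N k : all (gen_ok N) (Tw k) /\ count_gamma (Tw k) = 0%N.
Proof. by rewrite /Tw /count_gamma; case: ifP => _; rewrite all_nseq count_nseq /= orbT /=. Qed.

Lemma Ww_ok N k : all (gen_ok N) (Ww k) /\ count_gamma (Ww k) = 0%N.
Proof. by rewrite /Ww /count_gamma; case: ifP => _; rewrite all_nseq count_nseq /= orbT /=. Qed.

Lemma cdiv (a b : int) : b != 0 -> exists q, 2 * `|a - q * b| <= `|b|.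
Proof.
move=> bn0.
have D0 : 2 * `|b| != 0 by lia.
have Heq := divz_eq (2 * a + `|b|) (2 * `|b|).
have Hge := modz_ge0 (2 * a + `|b|) D0.
have Hlt : ((2 * a + `|b|) %% (2 * `|b|))%Z < 2 * `|b|.
  by apply: ltz_pmod; lia.
set q0 := ((2 * a + `|b|) %/ (2 * `|b|))%Z in Heq.
set m := ((2 * a + `|b|) %% (2 * `|b|))%Z in Heq Hge Hlt.
have [bp|bn] : 0 < b \/ b < 0 by lia.
- exists q0. have -> : `|b| = b by lia.
  have E : `|b| = b by lia. rewrite E in Heq Hlt. nia.
- exists (- q0). have E : `|b| = - b by lia. rewrite E in Heq Hlt *. nia.
Qed.

Lemma tlog_step (m n : nat) : (0 < m)%N -> (2 * m <= n)%N ->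
  ((trunc_log 2 m).+1 <= trunc_log 2 n)%N.
Proof.
move=> m0 mn; apply: trunc_log_max => //.
rewrite expnS; apply: leq_trans mn; rewrite leq_mul2l /=.
exact: trunc_logP.
Qed.

Lemma count_gamma_cat w1 w2 : count_gamma (w1 ++ w2) = (count_gamma w1 + count_gamma w2)%N.
Proof. exact: count_cat. Qed.
Lemma no_unit_mul (x : int) (N : nat) : (2 <= N)%N -> x * N%:Z = -1 -> False.
Proof. move=> H1 H2; have [Hx|Hx] : 0 <= x \/ x <= -1 by lia. all: nia. Qed.

Lemma abs_unit (a d : int) : a * d = 1 -> `|a| = 1.
Proof. move=> H; have [Hx|[Hx|[Hx|[Hx|Hx]]]] : a = 0 \/ a = 1 \/ a = -1 \/ 2 <= a \/ a <= -2 by lia; try (subst a; lia). all: have [Hd|[Hd|Hd]] : d = 0 \/ 1 <= d \/ d <= -1 by lia; try (subst d; lia). all: nia. Qed.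

Lemma a_nz (N : nat) a b C d : (2 <= N)%N -> a * d - b * (C * N%:Z) = 1 -> a != 0.
Proof.
move=> N2 H; apply/eqP => a0; subst a.
apply: (@no_unit_mul (b * C) N N2); rewrite -H; ring.
Qed.

Section Main.
Variable N : nat.
Hypothesis hN : prime N.
Variable gamma : int -> 'M[int]_2.
Hypothesis hgamma : forall r : int, admissible_r N r ->
     inGamma0 N (gamma r) /\ gamma r i0 i0 = r /\ gamma r i0 i1 = -1.

Lemma N2 : (2 <= N)%N.
Proof. exact: prime_gt1. Qed.

Definition Goal_ a b C d := exists (s : bool) (w : seq gen),
    all (gen_ok N) w /\
    mx2 a b (C * N%:Z) d = (-1) ^+ s *: word_mx N gamma w /\
    (count_gamma w <= trunc_log 2 `|a|)%N.

Lemma base a b C d : `|a| = 1 -> a * d - b * (C * N%:Z) = 1 -> Goal_ a b C d.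
Proof.
move=> a1 H.
have [E|E] : a = 1 \/ a = -1 by lia.
- exists false, (Ww C ++ Tw b); rewrite all_cat count_gamma_cat.
  have [o1 c1] := Tw_ok N b; have [o2 c2] := Ww_ok N C.
  rewrite o1 o2 c1 c2 E /= trunc_log1; split => //; split => //.
  rewrite scale1r word_cat word_Ww word_Tw mx2_mul; subst a; congr mx2; try ring.
  lia.
- exists true, (Ww (-C) ++ Tw (-b)); rewrite all_cat count_gamma_cat.
  have [o1 c1] := Tw_ok N (-b); have [o2 c2] := Ww_ok N (-C).
  rewrite o1 o2 c1 c2 E /= trunc_log1; split => //; split => //.
  rewrite expr1 word_cat word_Ww word_Tw mx2_mul mx2_scale; subst a; congr mx2; try ring.
  lia.
Qed.


Lemma key n : forall a b C d, (`|a| <= n)%N -> a * d - b * (C * N%:Z) = 1 -> Goal_ a b C d.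
Proof.
have N2 := N2.
elim: n => [|n IH] a b C d Ha Hdet.
  by move: (@a_nz N a b C d N2 Hdet); lia.
have anz := @a_nz N a b C d N2 Hdet.
have [a1|a_ge2] : `|a| = 1 \/ 2 <= `|a| by lia.
  exact: base.
have Nnz : N%:Z != 0 by lia.
have [q Hq] := @cdiv (C * N%:Z) a anz.
have [k Hk] := @cdiv q N%:Z Nnz.
set r := q - k * N%:Z in Hk.
set C' := C - k * a.
set d' := d - k * N%:Z * b.
have E1 : mx2 a b (C * N%:Z) d = word_mx N gamma (Ww k) *m mx2 a b (C' * N%:Z) d'.
  by rewrite word_Ww mx2_mul; congr mx2; rewrite /C' /d'; ring.
have Hdet1 : a * d' - b * (C' * N%:Z) = 1.
  by rewrite -Hdet /C' /d'; ring.
have Hr : C' * N%:Z - r * a = C * N%:Z - q * a by rewrite /C' /r; ring.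
have [o0 c0] := Ww_ok N k.
have [r2|r1] : 2 <= `|r| \/ `|r| <= 1 by lia.
-
  have adm : admissible_r N r.
    apply/andP; split => //.
    have : 2 * `|r| <= N%:Z by lia.
    rewrite le_eqVlt => /orP[/eqP E|//].
    have Ed : (2 %| N)%N by apply/dvdnP; exists `|r|%N; lia.
    have E2 := elimT (@prime_nt_dvdP 2 N hN isT) Ed.
    lia.
  have [[[Hdg Hdiv] [Hg0 Hg1]]] := hgamma r adm.
  case/dvdzP: Hdiv => g0 Hg2.
  set h := gamma r i1 i1.
  have Eg : gamma r = mx2 r (-1) (g0 * N%:Z) h.
    by rewrite {1}[gamma r]mx2_eta Hg0 Hg1 Hg2.
  have Hdg' : r * h - (-1) * (g0 * N%:Z) = 1 by rewrite -det_mx2 -Eg.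
  set a2 := r * a - C' * N%:Z.
  set b2 := r * b - d'.
  set C2 := g0 * a + h * C'.
  set d2 := g0 * N%:Z * b + h * d'.
  have E2 : gamma r *m mx2 a b (C' * N%:Z) d' = mx2 a2 b2 (C2 * N%:Z) d2.
    by rewrite Eg mx2_mul; congr mx2; rewrite /a2 /b2 /C2 /d2; ring.
  have E3 : mx2 a b (C' * N%:Z) d' = invmx (gamma r) *m mx2 a2 b2 (C2 * N%:Z) d2.
    by rewrite -E2 mulKmx // unitmxE Hdg unitr1.
  have Hdet2 : a2 * d2 - b2 * (C2 * N%:Z) = 1.
    have -> : a2 * d2 - b2 * (C2 * N%:Z) = (r * h - (-1) * (g0 * N%:Z)) * (a * d' - b * (C' * N%:Z)).
      by rewrite /a2 /b2 /C2 /d2; ring.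
    by rewrite Hdg' Hdet1 mul1r.
  have a2nz := @a_nz N a2 b2 C2 d2 N2 Hdet2.
  have Ha2 : 2 * `|a2| <= `|a| by rewrite /a2; lia.
  have [s [w [ow [Ew cw]]]] := IH a2 b2 C2 d2 ltac:(lia) Hdet2.
  exists s, (Ww k ++ gGinv r :: w).
  rewrite all_cat count_gamma_cat o0 c0 /= adm ow; split => //; split.
    rewrite E1 E3 Ew word_cat /= -!scalemxAr; congr (_ *: _).
  rewrite add0n add1n; apply: leq_trans (@tlog_step `|a2|%N `|a|%N _ _); [by rewrite ltnS | lia | lia].
- have C'nz : C' != 0.
    apply/eqP => C0; move: Hdet1; rewrite C0 mul0r mulr0 subr0 => /abs_unit; lia.
  have CNnz : C' * N%:Z != 0 by rewrite mulf_neq0.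
  have [p Hp] := @cdiv a (C' * N%:Z) CNnz.
  have Hb : 2 * `|C' * N%:Z| <= 3 * `|a|.
    have : `|r * a| <= `|a| by rewrite normrM; nia.
    lia.
  set a2 := a - p * (C' * N%:Z).
  set b2 := b - p * d'.
  have E2 : mx2 a b (C' * N%:Z) d' = word_mx N gamma (Tw p) *m mx2 a2 b2 (C' * N%:Z) d'.
    by rewrite word_Tw mx2_mul; congr mx2; rewrite /a2 /b2; ring.
  have Hdet2 : a2 * d' - b2 * (C' * N%:Z) = 1.
    by rewrite -Hdet1 /a2 /b2; ring.
  have [o1 c1] := Tw_ok N p.
  have [s [w [ow [Ew cw]]]] := IH a2 b2 C' d' ltac:(rewrite /a2; lia) Hdet2.
  exists s, (Ww k ++ Tw p ++ w).
  rewrite !all_cat !count_gamma_cat o0 c0 o1 c1 ow; split => //; split.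
    by rewrite E1 E2 Ew !word_cat -!scalemxAr.
  apply: leq_trans cw _; apply: leq_trunc_log; rewrite /a2; lia.
Qed.

End Main.

Theorem lemma4p7 (N : nat) (hN : prime N) (gamma : int -> 'M[int]_2)
  (hgamma : forall r : int, admissible_r N r ->
     inGamma0 N (gamma r) /\ gamma r i0 i0 = r /\ gamma r i0 i1 = -1)
  (A B C D : int)
  (hM : inGamma0 N (mx2 A B (C * N%:Z) D)) :
  exists (s : bool) (w : seq gen),
    all (gen_ok N) w /\
    mx2 A B (C * N%:Z) D = (-1) ^+ s *: word_mx N gamma w /\
    (count_gamma w <= trunc_log 2 `|A|)%N.
Proof.
case: hM => Hd _; rewrite det_mx2 in Hd.
exact: (@key N hN gamma hgamma `|A|%N A B C D (leqnn _) Hd).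
Qed.
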